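(* Under the setting in the context, assume $\sigma_A=0$ and $S^2\ge M_iR_i/p_i^2$ for all $i$. Choose $\beta_t=0$ for all $t$, $B_t=B_0=1$, $A_0=\frac{3B_0}{S^2p_R^2}$ with $p_R=\min_i p_i/R_i$, and $A_{t+1}=A_t+a_{t+1}$, $\alpha_t=a_{t+1}/A_{t+1}$, where $a_{t+1}>0$ solves $a_{t+1}^2S^2=A_{t+1}B_0$. Then the condition $1-\beta_t-\frac{\alpha_tR_i}{p_i}\ge0$ holds for all $i,t$, and the generalized APCG iterates satisfy $$\mathbb{E}[F(x_t)]-F(\theta^\star)\le\frac{2}{t^2}\Big[S^2r_t^2+\frac{6}{p_R^2}\big[F(x_0)-F(\theta^\star)\big]\Big],$$ with $r_t^2=\|v_0-\theta^\star\|^2_{A^\dagger A}-\mathbb{E}\big[\|v_t-\theta^\star\|^2_{A^\dagger A}\big]$.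
   Context: Setting. Minimize $F(x)=f_A(x)+\sum_{i=1}^d\psi_i(x^{(i)})$ over $\mathbb{R}^d$; $\theta^\star$ a minimizer. $A$ is a matrix with $d$ columns, $A^\dagger$ its pseudo-inverse, $\|u\|^2_{A^\dagger A}=u^TA^\dagger Au$, $e_i$ unit vectors, $x^{(i)}=e_i^Tx$, $R_i=e_i^TA^\dagger Ae_i$ (the minimum defining $p_R$ is over $i$ with $R_i>0$). Each $\psi_i$ is convex; $f_A$ is differentiable with $f_A(x)-f_A(y)\ge\nabla f_A(y)^TA^\dagger A(x-y)+\frac{\sigma_A}{2}(x-y)^TA^\dagger A(x-y)$ for all $x,y$; $\nabla_if_A=e_ie_i^T\nabla f_A$; $f_A$ is $M_i$-smooth in direction $i$; for every $i$ either $R_i=1$ or $\psi_i=0$; sampling probabilities $p_i>0$ sum to $1$. Generalized APCG with $\eta_{i,t}=\frac{a_{t+1}}{B_{t+1}p_i}$: $x_0=v_0=0$; for each $t$: $y_t=\frac{(1-\alpha_t)x_t+\alpha_t(1-\beta_t)v_t}{1-\alpha_t\beta_t}$; sample $i$ w.p. $p_i$ independently; $z_{t+1}=v_{t+1}=(1-\beta_t)v_t+\beta_ty_t-\eta_{i,t}\nabla_if_A(y_t)$; replace $v_{t+1}^{(i)}={\rm prox}_{\eta_{i,t}\psi_i}(z_{t+1}^{(i)})$ where ${\rm prox}_{\eta\psi}(x)=\arg\min_v\frac{1}{2\eta}\|v-x\|^2+\psi(v)$; $x_{t+1}=y_t+\frac{\alpha_tR_i}{p_i}(v_{t+1}-(1-\beta_t)v_t-\beta_ty_t)$.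 *)

(* Defs.v *)
From HB Require Import structures.
From mathcomp Require Import all_boot all_order all_algebra.
From mathcomp Require Import all_classical all_reals all_analysis.
Set Implicit Arguments. Unset Strict Implicit. Unset Printing Implicit Defensive.
Import Order.TTheory GRing.Theory Num.Theory.
Import numFieldNormedType.Exports.
Local Open Scope ring_scope.

Section APCG.
Variables (R : realType) (m d : nat).

Definition sqnormP (Ad : 'M[R]_(d, m)) (A : 'M[R]_(m, d)) (u : 'cV[R]_d) : R :=
  (u^T *m (Ad *m A) *m u) 0 0.

Definition Rcoef (Ad : 'M[R]_(d, m)) (A : 'M[R]_(m, d)) (i : 'I_d) : R :=
  (Ad *m A) i i.

(* Ad is the Moore-Penrose pseudo-inverse of A (the four Penrose equations,
   which characterize it uniquely). *)
Definition is_pinv (A : 'M[R]_(m, d)) (Ad : 'M[R]_(d, m)) : Prop :=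
  [/\ A *m Ad *m A = A, Ad *m A *m Ad = Ad,
      (A *m Ad)^T = A *m Ad & (Ad *m A)^T = Ad *m A].

Definition is_pR (Rc p : 'I_d -> R) (pR : R) : Prop :=
  (exists2 i, 0 < Rc i & pR = p i / Rc i) /\
  (forall i, 0 < Rc i -> pR <= p i / Rc i).

Definition convex_fun (psi : R -> R) : Prop :=
  forall (x y l : R), 0 <= l <= 1 ->
    psi (l * x + (1 - l) * y) <= l * psi x + (1 - l) * psi y.

Definition is_prox (psi : R -> R) (eta x w : R) : Prop :=
  forall v : R, 1 / (2 * eta) * (w - x) ^+ 2 + psi w
                <= 1 / (2 * eta) * (v - x) ^+ 2 + psi v.

Definition evec (i : 'I_d) : 'cV[R]_d := delta_mx i 0.

Definition grad_i (grad : 'cV[R]_d -> 'cV[R]_d) (i : 'I_d) (y : 'cV[R]_d) :=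
  delta_mx i i *m grad y.

Definition apcg_step (grad : 'cV[R]_d -> 'cV[R]_d)
    (prox : 'I_d -> R -> R -> R) (Rc p : 'I_d -> R)
    (alpha beta a B : nat -> R) (t : nat) (i : 'I_d)
    (st : 'cV[R]_d * 'cV[R]_d) : 'cV[R]_d * 'cV[R]_d :=
  let x := st.1 in let v := st.2 in
  let y := (1 - alpha t * beta t)^-1 *:
           ((1 - alpha t) *: x + (alpha t * (1 - beta t)) *: v) in
  let eta := a t.+1 / (B t.+1 * p i) in
  let z := (1 - beta t) *: v + beta t *: y - eta *: grad_i grad i y in
  let v' := \col_j (if j == i then prox i eta (z i 0) else z j 0) in
  let x' := y + (alpha t * Rc i / p i) *: (v' - (1 - beta t) *: v - beta t *: y) in
  (x', v').

(* Run the algorithm from x_0 = v_0 = 0 along the sequence s of sampled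
   coordinates (s = [:: i_0; ...; i_{t-1}]); returns (x_t, v_t), t = size s. *)
Definition apcg_run grad prox Rc p alpha beta a B (s : seq 'I_d) :
    'cV[R]_d * 'cV[R]_d :=
  (foldl (fun (kst : nat * ('cV[R]_d * 'cV[R]_d)) i =>
            (kst.1.+1, apcg_step grad prox Rc p alpha beta a B kst.1 i kst.2))
         (0%N, (0, 0)) s).2.

(* Expectation over i_0, ..., i_{t-1} drawn independently with P(i) = p_i. *)
Definition expect (p : 'I_d -> R) (t : nat) (g : seq 'I_d -> R) : R :=
  \sum_(s : t.-tuple 'I_d) (\prod_(i <- s) p i) * g s.

End APCG.

(* Main.v *)
Require Import Defs.
From HB Require Import structures.
From mathcomp Require Import all_boot all_order all_algebra.
From mathcomp Require Import all_classical all_reals all_analysis.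
From mathcomp Require Import ring lra.
Import Order.TTheory GRing.Theory Num.Theory.
Import numFieldNormedType.Exports.
Local Open Scope ring_scope.

Lemma sum_tuple_cons (R : realType) (T : finType) (t : nat) (G : (t.+1).-tuple T -> R) :
  \sum_(s : (t.+1).-tuple T) G s = \sum_(i : T) \sum_(s : t.-tuple T) G [tuple of i :: s].
Proof.
rewrite pair_big /=.
rewrite (reindex (fun pr : T * t.-tuple T => [tuple of pr.1 :: pr.2])) //=.
exists (fun s : (t.+1).-tuple T => (thead s, [tuple of behead s])).
  by move=> [i s] _ /=; rewrite theadE; congr pair; apply: val_inj.
by move=> s _ /=; rewrite [RHS]tuple_eta.
Qed.

Lemma expect_cons (R : realType) (d t : nat) (p : 'I_d -> R) (g : seq 'I_d -> R) :
  expect p t.+1 g = \sum_i p i * expect p t (fun s => g (i :: s)).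
Proof.
rewrite /expect sum_tuple_cons; apply: eq_bigr => i _.
rewrite mulr_sumr; apply: eq_bigr => s _ /=.
by rewrite big_cons mulrA.
Qed.

Lemma expect_le (R : realType) (d t : nat) (p : 'I_d -> R) (g1 g2 : seq 'I_d -> R) :
  (forall i, 0 <= p i) -> (forall s, g1 s <= g2 s) -> expect p t g1 <= expect p t g2.
Proof.
move=> hp hg; rewrite /expect; apply: ler_sum => s _; apply: ler_wpM2l => //.
by apply: prodr_ge0 => i _.
Qed.

Lemma expect_lin (R : realType) (d t : nat) (p : 'I_d -> R) (g1 g2 : seq 'I_d -> R) (c1 c2 : R) :
  expect p t (fun s => c1 * g1 s + c2 * g2 s) = c1 * expect p t g1 + c2 * expect p t g2.
Proof.
rewrite /expect !mulr_sumr -big_split; apply: eq_bigr => s _ /=; ring.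
Qed.

Lemma expect_const (R : realType) (d t : nat) (p : 'I_d -> R) (c : R) :
  \sum_i p i = 1 -> expect p t (fun _ => c) = c.
Proof.
move=> hs; elim: t => [|t IH].
  rewrite /expect (big_pred1 [tuple]) ?big_nil ?mul1r // => s.
  by rewrite !inE; apply/esym/eqP/val_inj; case: s => -[].
rewrite expect_cons; under eq_bigr do rewrite IH.
by rewrite -mulr_suml hs mul1r.
Qed.

Section Mx.
Variables (R : realType) (m d : nat) (A : 'M[R]_(m, d)) (Ad : 'M[R]_(d, m)).
Hypothesis hpinv : is_pinv A Ad.

Lemma evecE (i k : 'I_d) : @evec R d i k 0 = (k == i)%:R.
Proof. by rewrite /evec mxE andbT. Qed.

Lemma P_sym : (Ad *m A)^T = Ad *m A.
Proof. by case: hpinv. Qed.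

Lemma P_idem : (Ad *m A) *m (Ad *m A) = Ad *m A.
Proof. by case: hpinv => _ h _ _; rewrite mulmxA h. Qed.

Lemma P_symE (i k : 'I_d) : (Ad *m A) i k = (Ad *m A) k i.
Proof. by rewrite -{1}P_sym mxE. Qed.

Lemma Rc_sumsq (i : 'I_d) : Rcoef Ad A i = \sum_k (Ad *m A) k i ^+ 2.
Proof.
rewrite /Rcoef -{1}P_idem mxE; apply: eq_bigr => k _.
by rewrite P_symE expr2.
Qed.

Lemma Rc_ge0 (i : 'I_d) : 0 <= Rcoef Ad A i.
Proof. by rewrite Rc_sumsq; apply: sumr_ge0 => k _; apply: sqr_ge0. Qed.

Lemma Rc1_fix (i : 'I_d) (u : 'cV[R]_d) : Rcoef Ad A i = 1 -> ((Ad *m A) *m u) i 0 = u i 0.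
Proof.
move=> h1.
have hs := Rc_sumsq i.
have hii : (Ad *m A) i i = 1 by [].
rewrite (bigD1 i) //= hii h1 expr1n in hs.
have h0 : \sum_(k < d | k != i) (Ad *m A) k i ^+ 2 = 0.
  by apply/eqP; rewrite -(subr_eq0) -[X in X - _](addKr 1) -hs; apply/eqP; ring.
have hk : forall k, k != i -> (Ad *m A) k i = 0.
  move=> k hk; move/eqP: h0; rewrite psumr_eq0; last by move=> j _; apply: sqr_ge0.
  by move/allP => /(_ k (mem_index_enum k)); rewrite hk /= sqrf_eq0 => /eqP.
rewrite mxE (bigD1 i) //= hii mul1r big1 ?addr0 // => k hki.
by rewrite P_symE hk // mul0r.
Qed.

Lemma row_mulE (j : 'I_d) n (N : 'M[R]_(d, n)) k : ((@evec R d j)^T *m N) 0 k = N j k.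
Proof. by rewrite /evec trmx_delta -rowE mxE. Qed.

Lemma sqnorm_add (u : 'cV[R]_d) (dl : R) (j : 'I_d) :
  sqnormP Ad A (u + dl *: @evec R d j) =
  sqnormP Ad A u + 2 * dl * ((Ad *m A) *m u) j 0 + dl ^+ 2 * Rcoef Ad A j.
Proof.
rewrite /sqnormP.
have -> : (u + dl *: @evec R d j)^T = u^T + dl *: (@evec R d j)^T.
  by apply/matrixP => a b; rewrite !mxE.
rewrite !mulmxDl !mulmxDr.
rewrite -!scalemxAl -!scalemxAr.
have e1 : ((@evec R d j)^T *m (Ad *m A) *m u) 0 0 = ((Ad *m A) *m u) j 0.
  by rewrite -mulmxA row_mulE.
have e2 : (u^T *m (Ad *m A) *m @evec R d j) 0 0 = ((Ad *m A) *m u) j 0.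
  have ht : (u^T *m (Ad *m A) *m @evec R d j)^T = (@evec R d j)^T *m (Ad *m A) *m u.
    by rewrite trmx_mul (trmx_mul u^T (Ad *m A)) trmxK P_sym mulmxA.
  by rewrite -e1 -ht [in RHS]mxE.
have e3 : ((@evec R d j)^T *m (Ad *m A) *m @evec R d j) 0 0 = Rcoef Ad A j.
  by rewrite -mulmxA row_mulE /evec -colE mxE.
move: e1 e2 e3.
set X1 := u^T *m _ *m u; set X2 := u^T *m _ *m _; set X3 := _ *m _ *m u; set X4 := _^T *m _ *m _.
move=> e1 e2 e3. clearbody X1 X2 X3 X4. move: e1 e2 e3.
set Y := (Ad *m A *m u) j 0. clearbody Y. move=> e1 e2 e3.
rewrite !mxE e1 e2 e3; ring.
Qed.

Lemma lin_sum (g u : 'cV[R]_d) :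
  (g^T *m (Ad *m A) *m u) 0 0 = \sum_k g k 0 * ((Ad *m A) *m u) k 0.
Proof. by rewrite -mulmxA mxE; apply: eq_bigr => k _; rewrite mxE. Qed.

End Mx.

Lemma prox_ineq (R : realType) (psi : R -> R) eta z w th :
  convex_fun psi -> 0 < eta -> is_prox psi eta z w ->
  psi w - psi th <= (th - w) * (w - z) / eta.
Proof.
move=> hc he hp.
have key : forall s, 0 < s <= 1 ->
    psi w - psi th <= (th - w) * (w - z) / eta + s * ((th - w) ^+ 2 / (2 * eta)).
  move=> s /andP [s0 s1].
  have h1 := hp (s * th + (1 - s) * w).
  have h2 := hc th w s; rewrite (ltW s0) s1 /= in h2; have {h2}h2 := h2 isT.
  have h3 : s * (psi w - psi th) <=
      s * ((th - w) * (w - z) / eta + s * ((th - w) ^+ 2 / (2 * eta))).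
    have e : 1 / (2 * eta) * ((s * th + (1 - s) * w) - z) ^+ 2 =
       1 / (2 * eta) * (w - z) ^+ 2 + s * ((th - w) * (w - z) / eta + s * ((th - w) ^+ 2 / (2 * eta))).
      by field; rewrite gt_eqF.
    rewrite e in h1; lra.
  by rewrite ler_pM2l in h3.
apply/ler_addgt0Pr => e e0.
set C := (th - w) ^+ 2 / (2 * eta).
have C0 : 0 <= C by rewrite /C divr_ge0 ?sqr_ge0 // mulr_ge0 // ltW.
have hs0 : 0 < e / (e + C) by rewrite divr_gt0 // ltr_wpDr.
have hs1 : e / (e + C) <= 1 by rewrite ler_pdivrMr ?mul1r ?lerDl // ltr_wpDr.
have h1 := key _ (introT andP (conj hs0 hs1)); rewrite -/C in h1.
have h2 : e / (e + C) * C <= e.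
  rewrite mulrC mulrA ler_pdivrMr ?ltr_wpDr //; nra.
lra.
Qed.

Section Main.
Variables (R : realType) (m d : nat) (A : 'M[R]_(m,d)) (Ad : 'M[R]_(d,m))
  (fA : 'cV[R]_d -> R) (grad : 'cV[R]_d -> 'cV[R]_d)
  (psi : 'I_d -> R -> R) (prox : 'I_d -> R -> R -> R)
  (M p : 'I_d -> R) (S pR : R) (theta : 'cV[R]_d) (a A_ alpha : nat -> R).

Local Notation Rc := (Rcoef Ad A).
Local Notation P := (Ad *m A).
Local Notation e := (@evec R d).

Hypotheses (hpinv : is_pinv A Ad)
 (hconv : forall x y, ((grad y)^T *m P *m (x - y)) 0 0 <= fA x - fA y)
 (hsmooth : forall i x h, fA (x + h *: e i) <= fA x + h * grad x i 0 + M i / 2 * h ^+ 2)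
 (hpsic : forall i, convex_fun (psi i))
 (hcase : forall i, Rc i = 1 \/ psi i = (fun _ => 0))
 (hprox : forall i eta z, 0 < eta -> is_prox (psi i) eta z (prox i eta z))
 (hp : forall i, 0 < p i)
 (hsum : \sum_i p i = 1)
 (hM : forall i, M i * Rc i / p i ^+ 2 <= S ^+ 2)
 (hS : 0 < S ^+ 2)
 (hA0 : 0 < A_ 0)
 (hAs : forall t, A_ t.+1 = A_ t + a t.+1)
 (ha : forall t, 0 < a t.+1)
 (haS : forall t, a t.+1 ^+ 2 * S ^+ 2 = A_ t.+1)
 (hal : forall t, alpha t = a t.+1 / A_ t.+1)
 (halR : forall t i, 0 < Rc i -> alpha t * Rc i / p i <= 1)
 (haldec : forall t, alpha t.+1 <= alpha t).

Lemma Apos t : 0 < A_ t.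
Proof. elim: t => [//|t IH]; rewrite hAs; exact: addr_gt0. Qed.

Lemma alA t : A_ t.+1 * alpha t = a t.+1.
Proof. by rewrite hal mulrC divfK // gt_eqF // Apos. Qed.

Lemma alA1 t : A_ t.+1 * (1 - alpha t) = A_ t.
Proof. by rewrite mulrBr mulr1 alA hAs; ring. Qed.

Lemma al_ge0 t : 0 <= alpha t.
Proof. by rewrite hal divr_ge0 // ltW // ?Apos. Qed.

Lemma al_le1 t : alpha t <= 1.
Proof.
have h1 := alA1 t; have h2 := Apos t; have h3 := Apos t.+1.
have : 0 <= 1 - alpha t.
  by rewrite -(pmulr_rge0 _ h3) h1 ltW.
lra.
Qed.

Definition step t i xv := apcg_step grad prox Rc p alpha (fun _ => 0) a (fun _ => 1) t i xv.
Arguments step : simpl never.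

Lemma gradiE (g : 'cV[R]_d) i j : (delta_mx i i *m g) j 0 = (j == i)%:R * g i 0.
Proof.
rewrite mxE (bigD1 i) //= big1 ?addr0 => [|k hk]; first by rewrite mxE eqxx andbT.
by rewrite mxE (negbTE hk) andbF mul0r.
Qed.

Lemma gradiE' (g : 'cV[R]_d) i j :
  \sum_k delta_mx i i j k * g k 0 = (j == i)%:R * g i 0.
Proof. by have := gradiE g i j; rewrite mxE. Qed.

Lemma step_spec t i (x v : 'cV[R]_d) :
  let y := (1 - alpha t) *: x + alpha t *: v in
  let eta := a t.+1 / p i in
  let w := prox i eta (v i 0 - eta * grad y i 0) in
  step t i (x, v) = (y + (alpha t * Rc i / p i * (w - v i 0)) *: e i,
                     v + (w - v i 0) *: e i).
Proof.
move=> y eta w.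
rewrite /step /apcg_step /=.
rewrite mulr0 subr0 invr1 scale1r mulr1 -/y mul1r -/eta scale1r scale0r addr0.
have hv : \col_j (if j == i then prox i eta ((v - eta *: grad_i grad i y) i 0)
                  else (v - eta *: grad_i grad i y) j 0) = v + (w - v i 0) *: e i.
  apply/matrixP => j k; rewrite ord1 !mxE !gradiE' eqxx andbT.
  case: eqP => [->|_]; rewrite ?(mulr1, mulr0, mul1r, mul0r, subr0, addr0) //.
  by rewrite [RHS]addrC subrK.
rewrite hv; congr pair.
by rewrite subr0 (addrC v) addrK scalerA.
Qed.


Definition ext_step t i (st : ('cV[R]_d * 'cV[R]_d) * ('I_d -> R)) :=
  let xv' := step t i st.1 in
  (xv', fun j => (1 - alpha t) * st.2 j + alpha t * psi j (st.1.2 j 0)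
          + (if j == i then alpha t / p i * (psi i (xv'.2 i 0) - psi i (st.1.2 i 0)) else 0)).

Definition Fobj (x : 'cV[R]_d) := fA x + \sum_i psi i (x i 0).

Definition Phi t (st : ('cV[R]_d * 'cV[R]_d) * ('I_d -> R)) :=
  A_ t * (fA st.1.1 + \sum_j st.2 j - Fobj theta) + 1/2 * sqnormP Ad A (st.1.2 - theta).

Lemma key_R1 (aa dl g Q pw pth p1 w v th eta : R) :
  0 < aa -> 0 < p1 -> eta = aa / p1 -> w = v + dl -> Q = v - th ->
  pw - pth <= (th - w) * (w - (v - eta * g)) / eta ->
  aa * 1 * dl * g + 1 * p1 * dl ^+ 2 + aa * g * Q + aa * (pw - pth) + p1 * dl * Q <= 0.
Proof.
move=> ha0 hp0 he hw hQ hpr.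
have e1 : (th - w) * (w - (v - eta * g)) / eta = (- (Q + dl) * (p1 * dl + aa * g)) / aa.
  by rewrite he hw hQ; field; rewrite ?gt_eqF.
rewrite e1 in hpr.
have h2 : aa * (pw - pth) <= - (Q + dl) * (p1 * dl + aa * g).
  by rewrite mulrC -ler_pdivlMr.
have e2 : aa * 1 * dl * g + 1 * p1 * dl ^+ 2 + aa * g * Q + p1 * dl * Q
          = (Q + dl) * (p1 * dl + aa * g) by ring.
lra.
Qed.

Lemma key_psi0 (aa R1 dl g Q p1 eta : R) :
  0 < p1 -> eta = aa / p1 -> dl = - (eta * g) ->
  aa * R1 * dl * g + R1 * p1 * dl ^+ 2 + aa * g * Q + aa * (0 - 0) + p1 * dl * Q <= 0.
Proof.
move=> hp0 he hd.
have e1 : p1 * dl = - (aa * g) by rewrite hd he; field; rewrite gt_eqF.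
have -> : aa * R1 * dl * g + R1 * p1 * dl ^+ 2 + aa * g * Q + aa * (0 - 0) + p1 * dl * Q
   = (aa * g + p1 * dl) * (Q + R1 * dl) by ring.
by rewrite e1 subrr mul0r.
Qed.

Lemma smooth_arith (A1 p1 al aa R1 M1 S2 dl g : R) :
  0 < A1 -> 0 < p1 -> 0 < S2 -> 0 < aa -> 0 <= R1 -> al = aa / A1 -> aa ^+ 2 * S2 = A1 ->
  M1 * R1 / p1 ^+ 2 <= S2 ->
  A1 * p1 * ((al * R1 / p1 * dl) * g + M1 / 2 * (al * R1 / p1 * dl) ^+ 2)
   <= aa * R1 * dl * g + R1 * p1 * dl ^+ 2 / 2.
Proof.
move=> hA hp0 hS0 haa hR hal0 haS0 hM0.
have hA1 : A1 != 0 by rewrite gt_eqF.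
have e1 : A1 * p1 * ((al * R1 / p1 * dl) * g) = aa * R1 * dl * g.
  by rewrite hal0; field; rewrite gt_eqF.
have e2 : A1 * p1 * (M1 / 2 * (al * R1 / p1 * dl) ^+ 2)
   = (M1 * R1 / p1 ^+ 2) / S2 * (R1 * p1 * dl ^+ 2 / 2).
  rewrite hal0 -haS0; field.
  by rewrite !gt_eqF.
have h3 : (M1 * R1 / p1 ^+ 2) / S2 <= 1 by rewrite ler_pdivrMr // mul1r.
have h4 : 0 <= R1 * p1 * dl ^+ 2 / 2.
  by apply: divr_ge0 => //; apply: mulr_ge0; [apply: mulr_ge0 => //; apply: ltW|apply: sqr_ge0].
rewrite mulrDr e1 e2.
have : (M1 * R1 / p1 ^+ 2) / S2 * (R1 * p1 * dl ^+ 2 / 2) <= R1 * p1 * dl ^+ 2 / 2.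
  by rewrite -[X in _ <= X]mul1r; apply: ler_wpM2r.
lra.
Qed.

Lemma per_arith (pp A1 al aa fx' fy H Psv Fth N dl Q R1 g M1 pw pv pth sq' : R) :
 0 < pp -> 0 < A1 -> A1 * al = aa ->
 fx' <= fy + (al * R1 / pp * dl) * g + M1 / 2 * (al * R1 / pp * dl) ^+ 2 ->
 A1 * pp * ((al * R1 / pp * dl) * g + M1 / 2 * (al * R1 / pp * dl) ^+ 2)
   <= aa * R1 * dl * g + R1 * pp * dl ^+ 2 / 2 ->
 aa * R1 * dl * g + R1 * pp * dl ^+ 2 + aa * g * Q + aa * (pw - pth) + pp * dl * Q <= 0 ->
 sq' = N + 2 * dl * Q + dl ^+ 2 * R1 ->
 pp * (A1 * (fx' + ((1 - al) * H + al * Psv + al / pp * (pw - pv)) - Fth) + 1 / 2 * sq')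
  <= pp * (A1 * (fy + (1 - al) * H + al * Psv - Fth) + 1 / 2 * N) - aa * g * Q + aa * pth - aa * pv.
Proof.
move=> hp0 hA hal0 hsm hSm hk hsq.
set st := (al * R1 / pp * dl) * g + M1 / 2 * (al * R1 / pp * dl) ^+ 2.
have h1 : pp * A1 * fx' <= pp * A1 * (fy + st).
  by apply: ler_wpM2l; [apply: mulr_ge0; apply: ltW | rewrite /st addrA].
have e1 : pp * (A1 * (fx' + ((1 - al) * H + al * Psv + al / pp * (pw - pv)) - Fth) + 1 / 2 * sq')
  = pp * A1 * fx' + pp * A1 * ((1 - al) * H + al * Psv - Fth) + aa * (pw - pv)
    + pp * (N / 2) + pp * dl * Q + pp * dl ^+ 2 * R1 / 2.
  by rewrite hsq -hal0; field; rewrite gt_eqF.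
have e2 : pp * A1 * (fy + st) = pp * A1 * fy + A1 * pp * st by ring.
rewrite e1; rewrite e2 in h1.
have e3 : pp * (A1 * (fy + (1 - al) * H + al * Psv - Fth) + 1 / 2 * N)
  = pp * A1 * fy + pp * A1 * ((1 - al) * H + al * Psv - Fth) + pp * (N / 2) by ring.
rewrite e3.
have e4 : aa * (pw - pv) = aa * (pw - pth) + aa * pth - aa * pv by ring.
rewrite e4. rewrite -/st in hSm.
have e5 : R1 * pp * dl ^+ 2 = R1 * pp * dl ^+ 2 / 2 + pp * dl ^+ 2 * R1 / 2 by field.
lra.
Qed.

Lemma entryDZ (X Y : 'M[R]_(1,1)) c1 c2 : (c1 *: X + c2 *: Y) 0 0 = c1 * X 0 0 + c2 * Y 0 0.
Proof. by rewrite !mxE. Qed.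

Lemma entryNZ (X : 'M[R]_(1,1)) c1 : (- (c1 *: X)) 0 0 = - (c1 * X 0 0).
Proof. by rewrite !mxE. Qed.

Lemma conv_bound t (x v : 'cV[R]_d) :
  A_ t.+1 * fA ((1 - alpha t) *: x + alpha t *: v) <= A_ t * fA x + a t.+1 * fA theta
    + a t.+1 * \sum_k grad ((1 - alpha t) *: x + alpha t *: v) k 0 * (P *m (v - theta)) k 0.
Proof.
set y := (1 - alpha t) *: x + alpha t *: v.
have h1 := hconv x y; have h2 := hconv theta y.
have hvec : A_ t *: (x - y) + a t.+1 *: (theta - y) = - (a t.+1 *: (v - theta)).
  apply/matrixP => k l; rewrite !mxE -(alA t) -(alA1 t); ring.
set lin := fun u : 'cV[R]_d => ((grad y)^T *m P *m u) 0 0.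
have hlin : A_ t * lin (x - y) + a t.+1 * lin (theta - y) = - (a t.+1 * lin (v - theta)).
  transitivity (lin (A_ t *: (x - y) + a t.+1 *: (theta - y))).
    by rewrite /lin /= [in RHS]mulmxDr -!scalemxAr entryDZ.
  by rewrite hvec /lin /= mulmxN -scalemxAr entryNZ.
have hl : lin (v - theta) = \sum_k grad y k 0 * (P *m (v - theta)) k 0 by rewrite /lin lin_sum.
rewrite -hl.
have hA := Apos t; have ha1 := ha t.
have h1' : A_ t * lin (x - y) <= A_ t * (fA x - fA y) by apply: ler_wpM2l => //; apply: ltW.
have h2' : a t.+1 * lin (theta - y) <= a t.+1 * (fA theta - fA y) by apply: ler_wpM2l => //; apply: ltW.
rewrite hAs. lra.
Qed.

Lemma ext_step_fst t i st : (ext_step t i st).1 = step t i st.1.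
Proof. by []. Qed.

Lemma ext_step_snd t i st j : (ext_step t i st).2 j =
  (1 - alpha t) * st.2 j + alpha t * psi j (st.1.2 j 0)
  + (if j == i then alpha t / p i * (psi i ((step t i st.1).2 i 0) - psi i (st.1.2 i 0)) else 0).
Proof. by []. Qed.

Lemma sum_hE t i st : \sum_j (ext_step t i st).2 j =
  (1 - alpha t) * \sum_j st.2 j + alpha t * \sum_j psi j (st.1.2 j 0)
  + alpha t / p i * (psi i ((step t i st.1).2 i 0) - psi i (st.1.2 i 0)).
Proof.
rewrite /ext_step /= !big_split /= -!mulr_sumr; congr (_ + _).
by rewrite (bigD1 i) //= eqxx big1 ?addr0 // => j /negbTE ->.
Qed.

Lemma lyap_step t (x v : 'cV[R]_d) (h : 'I_d -> R) :
  \sum_i p i * Phi t.+1 (ext_step t i ((x, v), h)) <= Phi t ((x, v), h).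
Proof.
set y := (1 - alpha t) *: x + alpha t *: v.
set Q := P *m (v - theta).
set K := A_ t.+1 * (fA y + (1 - alpha t) * \sum_j h j + alpha t * \sum_j psi j (v j 0)
           - Fobj theta) + 1/2 * sqnormP Ad A (v - theta).
have per : forall i, p i * Phi t.+1 (ext_step t i ((x, v), h)) <=
    p i * K - a t.+1 * (grad y i 0 * Q i 0) + a t.+1 * psi i (theta i 0) - a t.+1 * psi i (v i 0).
  move=> i.
  have hsh := sum_hE t i ((x, v), h).
  rewrite /Phi hsh !ext_step_fst !step_spec /= -/y.
  set eta := a t.+1 / p i.
  set w := prox i eta (v i 0 - eta * grad y i 0).
  have hvi : (v + (w - v i 0) *: e i) i 0 = w.
    by rewrite !mxE eqxx /= mulr1 addrC subrK.
  rewrite hvi.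
  have hsq : v + (w - v i 0) *: e i - theta = (v - theta) + (w - v i 0) *: e i.
    by rewrite addrAC.
  rewrite hsq (@sqnorm_add R m d A Ad hpinv) mulrA.
  have hp0 := hp i; have hA1 := Apos t.+1; have ha1 := ha t.
  have heta : 0 < eta by rewrite /eta divr_gt0.
  apply: (@per_arith (p i) (A_ t.+1) (alpha t) (a t.+1) _ (fA y) _ _ _ _ (w - v i 0) (Q i 0)
            (Rc i) (grad y i 0) (M i)) => //.
  - exact: alA.
  - apply: smooth_arith; [exact: Apos | exact: hp | exact: hS | exact: ha | exact: (@Rc_ge0 R m d A Ad hpinv i)| exact: hal| exact: haS | exact: hM].
  - case: (hcase i) => [hR1|hpsi0].
      rewrite hR1.
      apply: (@key_R1 _ _ _ _ _ _ _ w (v i 0) (theta i 0) eta) => //.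
      + by rewrite addrC subrK.
      + by rewrite /Q (@Rc1_fix R m d A Ad hpinv) // !mxE.
      + have hh := @prox_ineq R (psi i) eta (v i 0 - eta * grad y i 0) w (theta i 0).
        by apply: hh; [exact: hpsic | exact: heta | exact: hprox].
    have hw : w = v i 0 - eta * grad y i 0.
      have := hprox i eta (v i 0 - eta * grad y i 0) heta (v i 0 - eta * grad y i 0).
      rewrite hpsi0 -/w subrr expr0n /= mulr0 !addr0 => h0.
      have : 0 <= 1 / (2 * eta) * (w - (v i 0 - eta * grad y i 0)) ^+ 2.
        by apply: mulr_ge0; [rewrite divr_ge0 // mulr_ge0 // ltW | apply: sqr_ge0].
      move=> h1; have h2 : 1 / (2 * eta) * (w - (v i 0 - eta * grad y i 0)) ^+ 2 = 0 by lra.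
      move/eqP: h2; rewrite mulf_eq0 sqrf_eq0 subr_eq0 => /orP [|/eqP //].
      by rewrite div1r invr_eq0 mulf_eq0 pnatr_eq0 /= gt_eqF.
    rewrite hpsi0.
    apply: (@key_psi0 _ _ _ _ _ _ eta) => //.
    by rewrite hw; ring.
apply: le_trans (ler_sum _ (fun i _ => per i)) _.
have eS : \sum_i (p i * K - a t.+1 * (grad y i 0 * Q i 0) + a t.+1 * psi i (theta i 0)
      - a t.+1 * psi i (v i 0)) = K - a t.+1 * \sum_i grad y i 0 * Q i 0
      + a t.+1 * \sum_i psi i (theta i 0) - a t.+1 * \sum_i psi i (v i 0).
  by rewrite !big_split /= !sumrN -!mulr_sumr -mulr_suml hsum mul1r.
rewrite eS.
have hc := conv_bound t x v; rewrite -/y -/Q in hc.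
have eK : K = A_ t.+1 * fA y + A_ t * \sum_j h j + a t.+1 * \sum_j psi j (v j 0)
   - (A_ t + a t.+1) * Fobj theta + 1/2 * sqnormP Ad A (v - theta).
  rewrite -(hAs t) -(alA1 t) -(alA t) /K; ring.
rewrite eK /Phi /Fobj /=.
rewrite /Fobj in eK.
lra.
Qed.

Definition InvJ t j (st : ('cV[R]_d * 'cV[R]_d) * ('I_d -> R)) :=
  (psi j = (fun _ => 0) /\ st.2 j = 0) \/
  (Rc j = 1 /\ exists lam u K, alpha t / p j <= lam <= 1 /\
      st.1.1 j 0 = lam * st.1.2 j 0 + (1 - lam) * u /\ psi j u <= K /\
      st.2 j = lam * psi j (st.1.2 j 0) + (1 - lam) * K).

Lemma Inv_bound t j st : InvJ t j st -> psi j (st.1.1 j 0) <= st.2 j.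
Proof.
case=> [[-> ->] //|[_ [lam [u [K [/andP [hl1 hl2] [hx [hK hh]]]]]]]].
have hl0 : 0 <= lam.
  apply: le_trans hl1; apply: divr_ge0; [exact: al_ge0 | exact: ltW].
rewrite hx hh.
apply: le_trans (hpsic j _ _ _ (introT andP (conj hl0 hl2))) _.
have : 0 <= 1 - lam by rewrite subr_ge0.
move=> h1; rewrite lerD2l; exact: ler_wpM2l.
Qed.

Lemma Inv_step t i (x v : 'cV[R]_d) (h : 'I_d -> R) j :
  InvJ t j ((x, v), h) -> InvJ t.+1 j (ext_step t i ((x, v), h)).
Proof.
rewrite /InvJ !ext_step_fst !ext_step_snd !step_spec /=.
set y := (1 - alpha t) *: x + alpha t *: v.
set eta := a t.+1 / p i.
set w := prox i eta (v i 0 - eta * grad y i 0).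
have hvj : (v + (w - v i 0) *: e i) j 0 = if j == i then w else v j 0.
  by rewrite !mxE andbT; case: eqP => [->|_]; rewrite ?mulr1 ?mulr0 ?addr0 // addrC subrK.
have hxj : forall cc, (y + cc *: e i) j 0 = (1 - alpha t) * x j 0 + alpha t * v j 0 + (if j == i then cc else 0).
  by move=> cc; rewrite !mxE andbT; case: eqP => [->|_]; rewrite ?mulr1 ?mulr0.
rewrite hvj hxj.
case=> [[hpsi hh]|[hR1 [lam [u [K [/andP [hl1 hl2] [hx [hK hh]]]]]]]].
  left; split => //; rewrite hh hpsi !mulr0 !add0r.
  case: (eqVneq j i) => [ej|nej]; last by [].
  by subst j; rewrite hpsi subrr mulr0.
right; split => //.
have hal0 := al_ge0 t; have hal1 := al_le1 t; have hp0 := hp j; have hdec := haldec t.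
have hdec' : alpha t.+1 / p j <= alpha t / p j by rewrite ler_pM2r // invr_gt0.
case: (eqVneq j i) => [ej|nej].
  subst j.
  have hvi : (v + (w - v i 0) *: e i) i 0 = w by rewrite !mxE eqxx /= mulr1 addrC subrK.
  rewrite hvi.
  have hc1 : alpha t * Rc i / p i <= 1 by apply: halR; rewrite hR1 ltr01.
  rewrite hR1 mulr1 in hc1 *.
  set c := alpha t / p i.
  have hc0 : 0 <= c by rewrite /c divr_ge0 // ltW.
  have [c1|c1] := eqVneq c 1.
    have l1 : lam = 1 by apply/eqP; rewrite eq_le hl2 /= -c1.
    rewrite l1 subrr mul0r addr0 mul1r in hx hh.
    exists 1, w, (psi i w); split; first by rewrite lexx andbT -c1.
    split; first by rewrite hx c1; ring.
    split; first by [].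
    by rewrite hh c1; ring.
  have c1' : 1 - c != 0 by rewrite subr_eq0 eq_sym.
  have hcl : c <= lam by [].
  set mu := (1 - alpha t) * (1 - lam) / (1 - c).
  have hc1' : 0 < 1 - c by rewrite subr_gt0 lt_neqAle c1 hc1.
  have hmu0 : 0 <= mu.
    by rewrite /mu divr_ge0 // ?mulr_ge0 // ?subr_ge0 // ltW.
  have hmu1 : mu <= 1.
    rewrite /mu ler_pdivrMr // mul1r.
    have : 0 <= alpha t * (1 - c) by rewrite mulr_ge0 // ltW.
    have : (1 - alpha t) * c <= (1 - alpha t) * lam by apply: ler_wpM2l; rewrite ?subr_ge0.
    nra.
  exists c, (mu * u + (1 - mu) * v i 0), (mu * K + (1 - mu) * psi i (v i 0)).
  split; first by apply/andP; split.
  split.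
    rewrite hx /mu; field => //.
  split.
    apply: le_trans (hpsic i _ _ _ (introT andP (conj hmu0 hmu1))) _.
    by rewrite lerD2r; apply: ler_wpM2l.
  rewrite hh /mu; field => //.
rewrite !addr0.
exists ((1 - alpha t) * lam + alpha t), u, K.
split.
  apply/andP; split.
    apply: le_trans hdec' _; apply: le_trans hl1 _.
    have : 0 <= alpha t * (1 - lam) by rewrite mulr_ge0 // subr_ge0.
    nra.
  have : (1 - alpha t) * lam <= (1 - alpha t) * 1 by apply: ler_wpM2l; rewrite ?subr_ge0.
  lra.
split; first by rewrite hx; ring.
split; first by [].
by rewrite hh; ring.
Qed.

Definition run_from k st (s : seq 'I_d) :=
  (foldl (fun kst i => (kst.1.+1, ext_step kst.1 i kst.2)) (k, st) s).2.

Lemma Inv_run s : forall k st, (forall j, InvJ k j st) ->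
  forall j, InvJ (k + size s) j (run_from k st s).
Proof.
elim: s => [|i s IH] k st hI j; first by rewrite addn0; exact: hI.
rewrite /= -addSnnS; apply: IH => j'.
case: st hI => [[x v] h] hI; exact: Inv_step.
Qed.

Lemma expect0 (g : seq 'I_d -> R) : expect p 0 g = g [::].
Proof.
rewrite /expect (big_pred1 [tuple]) ?big_nil ?mul1r // => s.
by rewrite !inE; apply/esym/eqP/val_inj; case: s => -[].
Qed.

Lemma lyap_run t : forall k st,
  expect p t (fun s => Phi (k + t) (run_from k st s)) <= Phi k st.
Proof.
elim: t => [|t IH] k st; first by rewrite expect0 addn0.
rewrite expect_cons.
apply: le_trans (_ : \sum_i p i * Phi k.+1 (ext_step k i st) <= _).
  apply: ler_sum => i _; apply: ler_wpM2l; first exact: ltW.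
  by rewrite -addSnnS; apply: IH.
case: st => [[x v] h]; exact: lyap_step.
Qed.

Lemma growth t : t%:R ^+ 2 / (4 * S ^+ 2) <= A_ t.
Proof.
have hS0 : 0 < 4 * S ^+ 2 by rewrite mulr_gt0.
elim: t => [|t IH]; first by rewrite expr0n /= mul0r ltW.
rewrite ler_pdivrMr // in IH *.
have e1 := haS t; have e2 := hAs t; have ha1 := ha t.
set q := 2 * S ^+ 2 * a t.+1.
have hq0 : 0 < q by rewrite /q; apply: mulr_gt0 => //; apply: mulr_gt0.
have eA1 : A_ t.+1 * (4 * S ^+ 2) = q ^+ 2 by rewrite /q -e1; ring.
have eA0 : A_ t * (4 * S ^+ 2) = q ^+ 2 - 2 * q.
  have -> : A_ t = A_ t.+1 - a t.+1 by rewrite e2; ring.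
  rewrite mulrBl eA1 /q; ring.
rewrite eA0 in IH; rewrite ler_pdivrMr // eA1.
have ht0 : 0 <= t%:R :> R by [].
have hq : t%:R + 1 <= q.
  case: (lerP q 1) => hq1.
    have h2 : 0 < q * (2 - q) by apply: mulr_gt0 => //; lra.
    have h3 : 0 <= t%:R ^+ 2 :> R by apply: sqr_ge0.
    have e3 : q * (2 - q) = 2 * q - q ^+ 2 by ring.
    lra.
  rewrite leNgt; apply/negP => h.
  have h2 : 0 < (t%:R - (q - 1)) * (t%:R + (q - 1)) by apply: mulr_gt0; lra.
  have e3 : (t%:R - (q - 1)) * (t%:R + (q - 1)) = t%:R ^+ 2 - (q ^+ 2 - 2 * q) - 1 :> R by ring.
  lra.
have e4 : (t.+1)%:R ^+ 2 = (t%:R + 1) ^+ 2 :> R by rewrite -natr1.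
rewrite e4.
have h5 : 0 <= t%:R + 1 :> R by lra.
by rewrite ler_pXn2r // ?nnegrE // ltW // (lt_le_trans _ hq) // ltr_wpDl.
Qed.

Lemma run_proj_gen s : forall k st,
  let r := foldl (fun kst i => (kst.1.+1, ext_step kst.1 i kst.2)) (k, st) s in
  (r.1, r.2.1) = foldl (fun kst i => (kst.1.+1, step kst.1 i kst.2)) (k, st.1) s.
Proof. by elim: s => [|i s IH] k st //=; rewrite IH. Qed.

Lemma run_proj s st : st.1 = (0, 0) ->
  (run_from 0 st s).1 = apcg_run grad prox Rc p alpha (fun _ => 0) a (fun _ => 1) s.
Proof.
move=> h0; have := congr1 snd (run_proj_gen s 0 st).
by rewrite /= h0 /apcg_run /run_from => ->.
Qed.

Lemma expect_le_sz t (g1 g2 : seq 'I_d -> R) :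
  (forall s, size s = t -> g1 s <= g2 s) -> expect p t g1 <= expect p t g2.
Proof.
move=> hg; rewrite /expect; apply: ler_sum => s _; apply: ler_wpM2l.
  by apply: prodr_ge0 => i _; exact: ltW.
by apply: hg; rewrite size_tuple.
Qed.

Lemma final_bound t (hopt : forall x, Fobj theta <= Fobj x)
  (hA0d : A_ 0 = 3 * 1 / (S ^+ 2 * pR ^+ 2)) (hpR : 0 < pR) : (0 < t)%N ->
  let run := apcg_run grad prox Rc p alpha (fun _ => 0) a (fun _ => 1) in
  expect p t (fun s => Fobj (run s).1) - Fobj theta
     <= 2 / (t%:R ^+ 2) *
          (S ^+ 2 * (sqnormP Ad A (0 - theta)
                - expect p t (fun s => sqnormP Ad A ((run s).2 - theta)))
           + 6 / pR ^+ 2 * (Fobj 0 - Fobj theta)).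
Proof.
move=> ht; cbv zeta.
set run := apcg_run grad prox Rc p alpha (fun _ => 0) a (fun _ => 1).
set st0 : ('cV[R]_d * 'cV[R]_d) * ('I_d -> R) := ((0, 0), fun j => psi j 0).
have hrun : forall s, run s = (run_from 0 st0 s).1 by move=> s; rewrite run_proj.
have hI0 : forall j, InvJ 0 j st0.
  move=> j; case: (hcase j) => [hR1|hpsi0].
    right; split => //; exists 1, 0, (psi j 0); rewrite /= !mxE.
    split; first by rewrite lexx andbT; have := halR 0 j; rewrite hR1 mulr1; apply; exact: ltr01.
    by split; [ring | split; [by [] | ring]].
  by left; split => //=; rewrite hpsi0.
set E := expect p t (fun s => Fobj (run s).1).
set EN := expect p t (fun s => sqnormP Ad A ((run s).2 - theta)).
set N0 := sqnormP Ad A (0 - theta).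
have hAt := Apos t.
have hE : A_ t * E + 1/2 * EN <= Phi 0 st0 + A_ t * Fobj theta.
  rewrite /E /EN -expect_lin.
  apply: le_trans (_ : expect p t (fun s => 1 * Phi (0 + t) (run_from 0 st0 s)
                                     + (A_ t * Fobj theta) * 1) <= _).
    apply: expect_le_sz => s hs.
    rewrite !hrun mul1r mulr1 /Phi add0n.
    have hIs := Inv_run s 0 st0 hI0; rewrite add0n hs in hIs.
    have hb : \sum_j psi j ((run_from 0 st0 s).1.1 j 0) <= \sum_j (run_from 0 st0 s).2 j.
      by apply: ler_sum => j _; apply: Inv_bound (hIs j).
    rewrite /Fobj.
    have : A_ t * (\sum_j psi j ((run_from 0 st0 s).1.1 j 0)) <= A_ t * \sum_j (run_from 0 st0 s).2 j.
      by apply: ler_wpM2l => //; exact: ltW.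
    lra.
  rewrite expect_lin (@expect_const R d t p _ hsum) mul1r mulr1 lerD2r.
  exact: lyap_run.
have hPhi0 : Phi 0 st0 = A_ 0 * (Fobj 0 - Fobj theta) + 1/2 * N0.
  rewrite /Phi /Fobj /=; congr (_ * _ + _); congr (_ - _); congr (_ + _).
  by apply: eq_bigr => j _; rewrite mxE.
have hEge : Fobj theta <= E.
  rewrite /E -[X in X <= _](@expect_const R d t p (Fobj theta) hsum).
  by apply: expect_le => [i|s]; [exact: ltW | exact: hopt].
set B := A_ 0 * (Fobj 0 - Fobj theta) + 1/2 * (N0 - EN).
have hB : A_ t * (E - Fobj theta) <= B by rewrite /B; lra.
have hg := growth t.
have ht0 : 0 < t%:R :> R by rewrite ltr0n.
have ht2 : 0 < t%:R ^+ 2 :> R by rewrite exprn_gt0.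
have hS4 : 0 < 4 * S ^+ 2 by rewrite mulr_gt0.
have h1 : t%:R ^+ 2 / (4 * S ^+ 2) * (E - Fobj theta) <= B.
  apply: le_trans hB; apply: ler_wpM2r => //; lra.
have eR : 2 / (t%:R ^+ 2) * (S ^+ 2 * (N0 - EN) + 6 / pR ^+ 2 * (Fobj 0 - Fobj theta))
   = 4 * S ^+ 2 / t%:R ^+ 2 * B.
  rewrite /B hA0d; field.
  apply/and3P; split; [by rewrite gt_eqF | by rewrite -sqrf_eq0 gt_eqF | by rewrite gt_eqF].
rewrite eR.
have eX : E - Fobj theta = 4 * S ^+ 2 / t%:R ^+ 2 * (t%:R ^+ 2 / (4 * S ^+ 2) * (E - Fobj theta)).
  by field; apply/andP; split; [rewrite -sqrf_eq0 gt_eqF | rewrite gt_eqF].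
rewrite [X in X <= _]eX; apply: ler_wpM2l => //.
by apply: divr_ge0; apply: ltW.
Qed.

End Main.

Lemma seq_facts (R : realType) (S pR : R) (a A_ alpha : nat -> R) :
  0 < S ^+ 2 -> 0 < pR -> A_ 0%N = 3 * 1 / (S ^+ 2 * pR ^+ 2) ->
  (forall t, A_ t.+1 = A_ t + a t.+1) -> (forall t, 0 < a t.+1) ->
  (forall t, a t.+1 ^+ 2 * S ^+ 2 = A_ t.+1) -> (forall t, alpha t = a t.+1 / A_ t.+1) ->
  [/\ forall t, alpha t <= pR, forall t, alpha t.+1 <= alpha t & forall t, 0 <= alpha t].
Proof.
move=> hS hpR hA0 hAs ha haS hal.
have hA0p : 0 < A_ 0%N.
  rewrite hA0; apply: divr_gt0; first by rewrite mulr1 ltr0n.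
  by apply: mulr_gt0 => //; apply: exprn_gt0.
have hmono : forall t, A_ 0%N <= A_ t.
  elim=> [//|t IH]; rewrite hAs; apply: le_trans IH _; rewrite lerDl ltW //.
have hApos : forall t, 0 < A_ t by move=> t; apply: lt_le_trans (hmono t).
have halE : forall t, alpha t * (a t.+1 * S ^+ 2) = 1.
  move=> t; rewrite hal -haS; field.
  by apply/andP; split; [rewrite -sqrf_eq0 gt_eqF | rewrite gt_eqF].
have haS1 : forall t, 1 < a t.+1 * S ^+ 2 * pR.
  move=> t.
  have h1 : A_ 0%N < A_ t.+1 by rewrite hAs; apply: le_lt_trans (hmono t) _; rewrite ltrDl.
  have hpos : 0 < S ^+ 2 * pR ^+ 2 by apply: mulr_gt0 => //; apply: exprn_gt0.
  rewrite -haS hA0 mulr1 ltr_pdivrMr // in h1.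
  have e : (a t.+1 * S ^+ 2 * pR) ^+ 2 = (a t.+1 ^+ 2 * S ^+ 2) * (S ^+ 2 * pR ^+ 2) by ring.
  have h2 : 3 < (a t.+1 * S ^+ 2 * pR) ^+ 2 by rewrite e.
  have h3 : 0 < a t.+1 * S ^+ 2 * pR by apply: mulr_gt0 => //; apply: mulr_gt0.
  rewrite ltNge; apply/negP => hX.
  have : (a t.+1 * S ^+ 2 * pR) ^+ 2 <= (a t.+1 * S ^+ 2 * pR) * 1.
    by rewrite expr2; apply: ler_wpM2l; [exact: ltW | exact: hX].
  lra.
have halpos : forall t, 0 <= alpha t by move=> t; rewrite hal divr_ge0 // ltW.
split => // t.
- have := halE t; have := haS1 t; have := halpos t; nra.
- have hE1 := halE t; have hE2 := halE t.+1.
  have hlt : a t.+1 < a t.+2.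
    have h1 : a t.+1 ^+ 2 * S ^+ 2 < a t.+2 ^+ 2 * S ^+ 2.
      by rewrite !haS (hAs t.+1) ltrDl.
    rewrite ltr_pM2r // in h1.
    by rewrite -(ltr_pXn2r (n:=2)) // nnegrE ltW.
  have h0 := halpos t; have h0' := halpos t.+1.
  have ha1 := ha t.
  have hk : 0 < a t.+1 * S ^+ 2 by apply: mulr_gt0.
  rewrite -(ler_pM2r hk) hE1.
  rewrite -hE2; apply: ler_wpM2l => //.
  by rewrite ler_pM2r // ltW.
Qed.

Theorem corollary2 (R : realType) (m d : nat)
  (A : 'M[R]_(m, d)) (Ad : 'M[R]_(d, m))
  (fA : 'cV[R]_d -> R) (grad : 'cV[R]_d -> 'cV[R]_d)
  (psi : 'I_d -> R -> R) (prox : 'I_d -> R -> R -> R)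
  (M p : 'I_d -> R) (sigmaA S pR : R) (theta : 'cV[R]_d)
  (a A_ B alpha beta : nat -> R) :
  is_pinv A Ad ->
  (forall x, differentiable fA x) ->
  (forall x h, 'd fA x h = \sum_j grad x j 0 * h j 0) ->
  (forall x y, fA x - fA y >= ((grad y)^T *m (Ad *m A) *m (x - y)) 0 0
                               + sigmaA / 2 * sqnormP Ad A (x - y)) ->
  (forall (i : 'I_d) x (h : R), fA (x + h *: @evec R d i) <=
                       fA x + h * grad x i 0 + M i / 2 * h ^+ 2) ->
  (forall i, convex_fun (psi i)) ->
  (forall i, Rcoef Ad A i = 1 \/ psi i = (fun _ => 0)) ->
  (forall i eta z, 0 < eta -> is_prox (psi i) eta z (prox i eta z)) ->
  (forall i, 0 < p i) -> \sum_i p i = 1 ->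
  let F := fun x : 'cV[R]_d => fA x + \sum_i psi i (x i 0) in
  (forall x, F theta <= F x) ->
  sigmaA = 0 ->
  (forall i, M i * Rcoef Ad A i / p i ^+ 2 <= S ^+ 2) ->
  (forall t, beta t = 0) ->
  (forall t, B t = 1) ->
  is_pR (Rcoef Ad A) p pR ->
  A_ 0%N = 3 * B 0%N / (S ^+ 2 * pR ^+ 2) ->
  (forall t, A_ t.+1 = A_ t + a t.+1) ->
  (forall t, 0 < a t.+1) ->
  (forall t, a t.+1 ^+ 2 * S ^+ 2 = A_ t.+1 * B 0%N) ->
  (forall t, alpha t = a t.+1 / A_ t.+1) ->
  let run := apcg_run grad prox (Rcoef Ad A) p alpha beta a B in
  (forall i t, 0 <= 1 - beta t - alpha t * Rcoef Ad A i / p i) /\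
  (forall t : nat, (0 < t)%N ->
     let rt2 := sqnormP Ad A (0 - theta)
                - expect p t (fun s => sqnormP Ad A ((run s).2 - theta)) in
     expect p t (fun s => F (run s).1) - F theta
     <= 2 / (t%:R ^+ 2) *
          (S ^+ 2 * rt2 + 6 / pR ^+ 2 * (F 0 - F theta))).
Proof.
move=> hpinv _ _ hconv0 hsm hpsic hcase hprox hp hsum F hopt hsig hM hbeta hB hpR hA0 hAs ha haS hal run.
have eB : B = (fun _ => 1) by apply: funext.
have ebeta : beta = (fun _ => 0) by apply: funext.
subst B beta.
rewrite /= in hA0 haS.
have haS' : forall t, a t.+1 ^+ 2 * S ^+ 2 = A_ t.+1 by move=> t; rewrite haS mulr1.
have hconv : forall x y, ((grad y)^T *m (Ad *m A) *m (x - y)) 0 0 <= fA x - fA y.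
  by move=> x y; have := hconv0 x y; rewrite hsig !mul0r addr0.
have hpRpos : 0 < pR.
  by case: hpR => -[i hi ->] _; rewrite divr_gt0.
have hS : 0 < S ^+ 2.
  rewrite lt_neqAle sqr_ge0 andbT eq_sym; apply/negP => /eqP hS0.
  have := haS' 0%N; rewrite hS0 mulr0 hAs hA0 hS0 mul0r invr0 mulr0 add0r => h0.
  by move: (ha 0%N); rewrite -h0 ltxx.
have [hpR1 hdec hal0] := @seq_facts R S pR a A_ alpha hS hpRpos hA0 hAs ha haS' hal.
have halR : forall t i, 0 < Rcoef Ad A i -> alpha t * Rcoef Ad A i / p i <= 1.
  move=> t i hRi; case: hpR => _ /(_ i hRi) hmin.
  have h1 : alpha t <= p i / Rcoef Ad A i := le_trans (hpR1 t) hmin.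
  by rewrite ler_pdivrMr // mul1r -ler_pdivlMr.
split.
  move=> i t /=; rewrite subr0 subr_ge0.
  have [hRi|hRi] := ltrP 0 (Rcoef Ad A i); first exact: halR.
  apply: le_trans (_ : 0 <= 1) => //.
  apply: mulr_le0_ge0; first exact: mulr_ge0_le0.
  by rewrite invr_ge0 ltW.
move=> t ht.
have hA0p : 0 < A_ 0%N.
  rewrite hA0; apply: divr_gt0; first by rewrite mulr1 ltr0n.
  by apply: mulr_gt0 => //; apply: exprn_gt0.
exact: (@final_bound R m d A Ad fA grad psi prox M p S pR theta a A_ alpha hpinv hconv hsm
  hpsic hcase hprox hp hsum hM hS hA0p hAs ha haS' hal halR hdec t hopt hA0 hpRpos ht).
Qed.
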